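(* Let $\rho>0$, $r>0$ and $(x_0,y_0,\theta_0)\in\mathbb{R}^2\times[0,2\pi]$, and consider the optimal control problem (OCP) of finding the minimum time $t_f>0$ such that there is a trajectory $(x(\cdot),y(\cdot),\theta(\cdot))$ on $[0,t_f]$ of $\dot x=\cos\theta$, $\dot y=\sin\theta$, $\dot\theta=u/\rho$, $u(t)\in[-1,1]$, with $(x(0),y(0),\theta(0))=(x_0,y_0,\theta_0)$, $x(t_f)^2+y(t_f)^2=r^2$ and $x(t_f)\cos\theta(t_f)+y(t_f)\sin\theta(t_f)=0$. Suppose the solution path is of type $C_1S_2C_3$. Then: (1) if $\rho\ge r/2$, the circular arc $C_3$ and the target circle are externally tangent to each other; (2) if $\rho<r/2$, the center of the target circle does not lie in the interior of the circle (of radius $\rho$) coinciding with $C_1$.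
   Context: The target circle is the circle of radius $r$ centered at the origin. A solution path is a minimum-time trajectory of the OCP. Type $C_1S_2C_3$ means the path is the concatenation of a circular arc $C_1$ of radius $\rho$ (left- or right-turning), a straight line segment $S_2$ of positive length, and a circular arc $C_3$ of radius $\rho$. ''$C_3$ and the target circle are externally tangent'' means the circle of radius $\rho$ containing $C_3$ touches the target circle from outside (center distance $r+\rho$). *)

(* Defs.v *)
From Stdlib Require Import Reals Lra.
From Coquelicot Require Import Coquelicot.
Open Scope R_scope.

(* An admissible trajectory of the Dubins-type control system
     x' = cos th, y' = sin th, th' = u/rho, |u| <= 1,
   on [0, tf], starting at (x0,y0,th0) and ending on the target manifold
   x^2 + y^2 = r^2, x cos th + y sin th = 0.
   The control condition (th absolutely continuous with th' = u/rho a.e.,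
   u measurable with values in [-1,1]) is stated in its equivalent form:
   th is (1/rho)-Lipschitz on [0,tf]. *)
Definition admissible (rho r x0 y0 th0 : R) (x y th : R -> R) (tf : R) : Prop :=
  0 < tf /\
  x 0 = x0 /\ y 0 = y0 /\ th 0 = th0 /\
  (forall t s, 0 <= t <= tf -> 0 <= s <= tf ->
     Rabs (th t - th s) <= Rabs (t - s) / rho) /\
  (forall t, 0 <= t <= tf ->
     x t = x0 + RInt (fun s => cos (th s)) 0 t /\
     y t = y0 + RInt (fun s => sin (th s)) 0 t) /\
  (x tf) ^ 2 + (y tf) ^ 2 = r ^ 2 /\
  x tf * cos (th tf) + y tf * sin (th tf) = 0.

Definition optimal (rho r x0 y0 th0 : R) (x y th : R -> R) (tf : R) : Prop :=
  admissible rho r x0 y0 th0 x y th tf /\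
  forall (x' y' th' : R -> R) (tf' : R),
    admissible rho r x0 y0 th0 x' y' th' tf' -> tf <= tf'.

(* The path is of type C1 S2 C3: arc with control s1 (= +1 left, -1 right)
   on [0,t1], straight segment on [t1,t2], arc with control s3 on [t2,tf],
   all three pieces of positive length. *)
Definition is_CSC (rho th0 : R) (th : R -> R) (tf t1 t2 s1 s3 : R) : Prop :=
  0 < t1 /\ t1 < t2 /\ t2 < tf /\
  (s1 = 1 \/ s1 = -1) /\ (s3 = 1 \/ s3 = -1) /\
  (forall t, 0 <= t <= t1 -> th t = th0 + s1 * t / rho) /\
  (forall t, t1 <= t <= t2 -> th t = th t1) /\
  (forall t, t2 <= t <= tf -> th t = th t2 + s3 * (t - t2) / rho).

Definition turn_center_x (rho s px phi : R) : R := px - s * rho * sin phi.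
Definition turn_center_y (rho s py phi : R) : R := py + s * rho * cos phi.

(* Main.v *)
Require Import Defs.
From Stdlib Require Import Reals Lra.
From Coquelicot Require Import Coquelicot.
Open Scope R_scope.

Lemma cont_of_ex (f : R -> R) x : ex_derive f x -> continuous f x.
Proof. intros H. exact (ex_derive_continuous (K:=R_AbsRing) (V:=R_NormedModule) f x H). Qed.

Lemma piece_cos (c s rho a b : R) : 0 < rho -> s * s = 1 -> a <= b ->
  is_RInt (fun t => cos (c + s * (t - a) / rho)) a b
          (rho * s * (sin (c + s * (b - a) / rho) - sin c)).
Proof.
  intros Hr Hs Hab.
  replace (rho * s * (sin (c + s * (b - a) / rho) - sin c)) with
    (minus ((fun t => rho * s * sin (c + s * (t - a) / rho)) b)
           ((fun t => rho * s * sin (c + s * (t - a) / rho)) a)).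
  2:{ unfold minus, plus, opp; simpl. replace (c + s * (a - a) / rho) with c by (field; lra). ring. }
  refine (is_RInt_derive (fun t => rho * s * sin (c + s * (t - a) / rho)) (fun t => cos (c + s * (t - a) / rho)) a b _ _).
  - intros x _. auto_derive; [exact I|].
    replace (c + s * (x + - a) * / rho) with (c + s * (x - a) / rho) by (unfold Rdiv; ring).
    replace (rho * s * (s * 1 * / rho * cos (c + s * (x - a) / rho))) with
      ((s*s) * (rho * / rho) * cos (c + s * (x - a) / rho)) by (unfold Rdiv; ring).
    rewrite Hs, Rinv_r; lra.
  - intros x _. apply cont_of_ex. auto_derive. exact I.
Qed.

Lemma piece_sin (c s rho a b : R) : 0 < rho -> s * s = 1 -> a <= b ->
  is_RInt (fun t => sin (c + s * (t - a) / rho)) a b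
          (- (rho * s * (cos (c + s * (b - a) / rho) - cos c))).
Proof.
  intros Hr Hs Hab.
  replace (- (rho * s * (cos (c + s * (b - a) / rho) - cos c))) with
    (minus ((fun t => - (rho * s * cos (c + s * (t - a) / rho))) b)
           ((fun t => - (rho * s * cos (c + s * (t - a) / rho))) a)).
  2:{ unfold minus, plus, opp; simpl. replace (c + s * (a - a) / rho) with c by (field; lra). ring. }
  refine (is_RInt_derive (fun t => - (rho * s * cos (c + s * (t - a) / rho))) (fun t => sin (c + s * (t - a) / rho)) a b _ _).
  - intros x _. auto_derive; [exact I|].
    replace (c + s * (x + - a) * / rho) with (c + s * (x - a) / rho) by (unfold Rdiv; ring).
    replace (- (rho * s * (s * 1 * / rho * - sin (c + s * (x - a) / rho)))) with
      ((s*s) * (rho * / rho) * sin (c + s * (x - a) / rho)) by (unfold Rdiv; ring).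
    rewrite Hs, Rinv_r; lra.
  - intros x _. apply cont_of_ex. auto_derive. exact I.
Qed.

Definition thb (th0 s1 sa sb T1 T2 T3 rho t : R) : R :=
  th0 + (s1 * Rmin t T1 + sa * Rmax 0 (Rmin t T3 - T2) + sb * Rmax 0 (t - T3)) / rho.

Ltac mm := unfold Rmin, Rmax; repeat (destruct Rle_dec); try lra.

Lemma is_RInt_const_R (c a b : R) : a <= b -> is_RInt (fun _ => c) a b ((b - a) * c).
Proof.
  intros H. pose proof (is_RInt_const a b c) as K. exact K.
Qed.

Section B.
Variables (th0 s1 sa sb T1 T2 T3 Tf rho : R).
Hypothesis (Hr : 0 < rho) (H1 : s1 * s1 = 1) (Ha : sa * sa = 1) (Hb : sb * sb = 1)
  (HT0 : 0 <= T1) (HT1 : T1 <= T2) (HT2 : T2 <= T3) (HT3 : T3 <= Tf).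

Let th1 := th0 + s1 * T1 / rho.
Let th3 := th1 + sa * (T3 - T2) / rho.
Let thf := th3 + sb * (Tf - T3) / rho.

Lemma thb_p1 t : 0 <= t <= T1 -> thb th0 s1 sa sb T1 T2 T3 rho t = th0 + s1 * (t - 0) / rho.
Proof. intros Ht. unfold thb. replace (Rmin t T1) with t by mm.
  replace (Rmax 0 (Rmin t T3 - T2)) with 0 by mm. replace (Rmax 0 (t - T3)) with 0 by mm.
  field. lra. Qed.
Lemma thb_p2 t : T1 <= t <= T2 -> thb th0 s1 sa sb T1 T2 T3 rho t = th1.
Proof. intros Ht. unfold thb, th1. replace (Rmin t T1) with T1 by mm.
  replace (Rmax 0 (Rmin t T3 - T2)) with 0 by mm. replace (Rmax 0 (t - T3)) with 0 by mm.
  field. lra. Qed.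
Lemma thb_p3 t : T2 <= t <= T3 -> thb th0 s1 sa sb T1 T2 T3 rho t = th1 + sa * (t - T2) / rho.
Proof. intros Ht. unfold thb, th1. replace (Rmin t T1) with T1 by mm.
  replace (Rmax 0 (Rmin t T3 - T2)) with (t - T2) by mm. replace (Rmax 0 (t - T3)) with 0 by mm.
  field. lra. Qed.
Lemma thb_p4 t : T3 <= t -> thb th0 s1 sa sb T1 T2 T3 rho t = th3 + sb * (t - T3) / rho.
Proof. intros Ht. unfold thb, th3, th1. replace (Rmin t T1) with T1 by mm.
  replace (Rmax 0 (Rmin t T3 - T2)) with (T3 - T2) by mm. replace (Rmax 0 (t - T3)) with (t - T3) by mm.
  field. lra. Qed.

Lemma RInt_cos_thb :
  RInt (fun t => cos (thb th0 s1 sa sb T1 T2 T3 rho t)) 0 Tf =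
  rho * s1 * (sin th1 - sin th0) + (T2 - T1) * cos th1 +
  rho * sa * (sin th3 - sin th1) + rho * sb * (sin thf - sin th3).
Proof.
  apply is_RInt_unique.
  set (f := fun t => cos (thb th0 s1 sa sb T1 T2 T3 rho t)).
  assert (I1 : is_RInt f 0 T1 (rho * s1 * (sin th1 - sin th0))).
  { replace th1 with (th0 + s1 * (T1 - 0) / rho) by (unfold th1; f_equal; f_equal; ring).
    eapply is_RInt_ext; [| apply (piece_cos th0 s1 rho 0 T1); lra].
    intros x Hx. rewrite Rmin_left in Hx by lra. rewrite Rmax_right in Hx by lra.
    unfold f. rewrite thb_p1 by lra. reflexivity. }
  assert (I2 : is_RInt f T1 T2 ((T2 - T1) * cos th1)).
  { eapply is_RInt_ext; [| apply (is_RInt_const_R (cos th1) T1 T2); lra].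
    intros x Hx. rewrite Rmin_left in Hx by lra. rewrite Rmax_right in Hx by lra.
    unfold f. rewrite thb_p2 by lra. reflexivity. }
  assert (I3 : is_RInt f T2 T3 (rho * sa * (sin th3 - sin th1))).
  { replace (rho * sa * (sin th3 - sin th1)) with (rho * sa * (sin (th1 + sa * (T3 - T2) / rho) - sin th1)) by reflexivity.
    eapply is_RInt_ext; [| apply (piece_cos th1 sa rho T2 T3); lra].
    intros x Hx. rewrite Rmin_left in Hx by lra. rewrite Rmax_right in Hx by lra.
    unfold f. rewrite thb_p3 by lra. reflexivity. }
  assert (I4 : is_RInt f T3 Tf (rho * sb * (sin thf - sin th3))).
  { replace (rho * sb * (sin thf - sin th3)) with (rho * sb * (sin (th3 + sb * (Tf - T3) / rho) - sin th3)) by reflexivity.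
    eapply is_RInt_ext; [| apply (piece_cos th3 sb rho T3 Tf); lra].
    intros x Hx. rewrite Rmin_left in Hx by lra. rewrite Rmax_right in Hx by lra.
    unfold f. rewrite thb_p4 by lra. reflexivity. }
  pose proof (is_RInt_Chasles f _ _ _ _ _ I1 I2) as I12.
  pose proof (is_RInt_Chasles f _ _ _ _ _ I12 I3) as I123.
  pose proof (is_RInt_Chasles f _ _ _ _ _ I123 I4) as I1234.
  unfold plus in I1234; simpl in I1234. exact I1234.
Qed.

Lemma RInt_sin_thb :
  RInt (fun t => sin (thb th0 s1 sa sb T1 T2 T3 rho t)) 0 Tf =
  - (rho * s1 * (cos th1 - cos th0)) + (T2 - T1) * sin th1 +
  - (rho * sa * (cos th3 - cos th1)) + - (rho * sb * (cos thf - cos th3)).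
Proof.
  apply is_RInt_unique.
  set (f := fun t => sin (thb th0 s1 sa sb T1 T2 T3 rho t)).
  assert (I1 : is_RInt f 0 T1 (- (rho * s1 * (cos th1 - cos th0)))).
  { replace th1 with (th0 + s1 * (T1 - 0) / rho) by (unfold th1; f_equal; f_equal; ring).
    eapply is_RInt_ext; [| apply (piece_sin th0 s1 rho 0 T1); lra].
    intros x Hx. rewrite Rmin_left in Hx by lra. rewrite Rmax_right in Hx by lra.
    unfold f. rewrite thb_p1 by lra. reflexivity. }
  assert (I2 : is_RInt f T1 T2 ((T2 - T1) * sin th1)).
  { eapply is_RInt_ext; [| apply (is_RInt_const_R (sin th1) T1 T2); lra].
    intros x Hx. rewrite Rmin_left in Hx by lra. rewrite Rmax_right in Hx by lra.
    unfold f. rewrite thb_p2 by lra. reflexivity. }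
  assert (I3 : is_RInt f T2 T3 (- (rho * sa * (cos th3 - cos th1)))).
  { eapply is_RInt_ext; [| apply (piece_sin th1 sa rho T2 T3); lra].
    intros x Hx. rewrite Rmin_left in Hx by lra. rewrite Rmax_right in Hx by lra.
    unfold f. rewrite thb_p3 by lra. reflexivity. }
  assert (I4 : is_RInt f T3 Tf (- (rho * sb * (cos thf - cos th3)))).
  { eapply is_RInt_ext; [| apply (piece_sin th3 sb rho T3 Tf); lra].
    intros x Hx. rewrite Rmin_left in Hx by lra. rewrite Rmax_right in Hx by lra.
    unfold f. rewrite thb_p4 by lra. reflexivity. }
  pose proof (is_RInt_Chasles f _ _ _ _ _ I1 I2) as I12.
  pose proof (is_RInt_Chasles f _ _ _ _ _ I12 I3) as I123.
  pose proof (is_RInt_Chasles f _ _ _ _ _ I123 I4) as I1234.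
  unfold plus in I1234; simpl in I1234. exact I1234.
Qed.

End B.

Lemma sum_mono (T1 T2 T3 s t : R) : T1 <= T2 -> T2 <= T3 -> s <= t ->
  0 <= Rmin t T1 - Rmin s T1 /\ 0 <= Rmax 0 (Rmin t T3 - T2) - Rmax 0 (Rmin s T3 - T2) /\
  0 <= Rmax 0 (t - T3) - Rmax 0 (s - T3) /\
  (Rmin t T1 - Rmin s T1) + (Rmax 0 (Rmin t T3 - T2) - Rmax 0 (Rmin s T3 - T2)) +
  (Rmax 0 (t - T3) - Rmax 0 (s - T3)) <= t - s.
Proof. intros. mm. Qed.

Lemma abs_sgn (s d : R) : (s = 1 \/ s = -1) -> 0 <= d -> Rabs (s * d) = d.
Proof. intros [-> | ->] Hd; unfold Rabs; destruct Rcase_abs; lra. Qed.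

Lemma thb_lip_le th0 s1 sa sb T1 T2 T3 rho s t :
  0 < rho -> (s1 = 1 \/ s1 = -1) -> (sa = 1 \/ sa = -1) -> (sb = 1 \/ sb = -1) ->
  T1 <= T2 -> T2 <= T3 -> s <= t ->
  Rabs (thb th0 s1 sa sb T1 T2 T3 rho t - thb th0 s1 sa sb T1 T2 T3 rho s) <= Rabs (t - s) / rho.
Proof.
  intros Hr H1 Ha Hb HT1 HT2 Hst.
  destruct (sum_mono T1 T2 T3 s t HT1 HT2 Hst) as (D1 & D2 & D3 & D).
  unfold thb.
  replace (th0 + (s1 * Rmin t T1 + sa * Rmax 0 (Rmin t T3 - T2) + sb * Rmax 0 (t - T3)) / rho -
   (th0 + (s1 * Rmin s T1 + sa * Rmax 0 (Rmin s T3 - T2) + sb * Rmax 0 (s - T3)) / rho))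
   with ((s1 * (Rmin t T1 - Rmin s T1) + sa * (Rmax 0 (Rmin t T3 - T2) - Rmax 0 (Rmin s T3 - T2))
          + sb * (Rmax 0 (t - T3) - Rmax 0 (s - T3))) / rho) by (field; lra).
  unfold Rdiv. rewrite Rabs_mult, (Rabs_right (/ rho)) by (apply Rle_ge, Rlt_le, Rinv_0_lt_compat; lra).
  apply Rmult_le_compat_r; [apply Rlt_le, Rinv_0_lt_compat; lra|].
  rewrite (Rabs_right (t - s)) by lra.
  eapply Rle_trans; [apply Rabs_triang|].
  eapply Rle_trans; [apply Rplus_le_compat_r, Rabs_triang|].
  rewrite !abs_sgn by assumption. lra.
Qed.

Lemma thb_lip th0 s1 sa sb T1 T2 T3 rho s t :
  0 < rho -> (s1 = 1 \/ s1 = -1) -> (sa = 1 \/ sa = -1) -> (sb = 1 \/ sb = -1) ->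
  T1 <= T2 -> T2 <= T3 ->
  Rabs (thb th0 s1 sa sb T1 T2 T3 rho t - thb th0 s1 sa sb T1 T2 T3 rho s) <= Rabs (t - s) / rho.
Proof.
  intros. destruct (Rle_dec s t).
  - apply thb_lip_le; auto.
  - rewrite Rabs_minus_sym, (Rabs_minus_sym t). apply thb_lip_le; auto; lra.
Qed.

Definition th1f th0 s1 T1 rho := th0 + s1 * T1 / rho.
Definition th3f th0 s1 sa T1 T2 T3 rho := th1f th0 s1 T1 rho + sa * (T3 - T2) / rho.
Definition thff th0 s1 sa sb T1 T2 T3 Tf rho := th3f th0 s1 sa T1 T2 T3 rho + sb * (Tf - T3) / rho.
Definition endX x0 th0 s1 sa sb T1 T2 T3 Tf rho :=
  x0 + (rho * s1 * (sin (th1f th0 s1 T1 rho) - sin th0) + (T2 - T1) * cos (th1f th0 s1 T1 rho) +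
  rho * sa * (sin (th3f th0 s1 sa T1 T2 T3 rho) - sin (th1f th0 s1 T1 rho)) +
  rho * sb * (sin (thff th0 s1 sa sb T1 T2 T3 Tf rho) - sin (th3f th0 s1 sa T1 T2 T3 rho))).
Definition endY y0 th0 s1 sa sb T1 T2 T3 Tf rho :=
  y0 + (- (rho * s1 * (cos (th1f th0 s1 T1 rho) - cos th0)) + (T2 - T1) * sin (th1f th0 s1 T1 rho) +
  - (rho * sa * (cos (th3f th0 s1 sa T1 T2 T3 rho) - cos (th1f th0 s1 T1 rho))) +
  - (rho * sb * (cos (thff th0 s1 sa sb T1 T2 T3 Tf rho) - cos (th3f th0 s1 sa T1 T2 T3 rho)))).

Lemma sq1 s : (s = 1 \/ s = -1) -> s * s = 1.
Proof. intros [-> | ->]; ring. Qed.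

Lemma RInt_cos_end th0 s1 sa sb T1 T2 T3 Tf rho :
  0 < rho -> (s1 = 1 \/ s1 = -1) -> (sa = 1 \/ sa = -1) -> (sb = 1 \/ sb = -1) ->
  0 <= T1 -> T1 <= T2 -> T2 <= T3 -> T3 <= Tf ->
  forall x0, x0 + RInt (fun t => cos (thb th0 s1 sa sb T1 T2 T3 rho t)) 0 Tf = endX x0 th0 s1 sa sb T1 T2 T3 Tf rho.
Proof.
  intros. rewrite RInt_cos_thb; try apply sq1; auto.
Qed.

Lemma RInt_sin_end th0 s1 sa sb T1 T2 T3 Tf rho :
  0 < rho -> (s1 = 1 \/ s1 = -1) -> (sa = 1 \/ sa = -1) -> (sb = 1 \/ sb = -1) ->
  0 <= T1 -> T1 <= T2 -> T2 <= T3 -> T3 <= Tf ->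
  forall y0, y0 + RInt (fun t => sin (thb th0 s1 sa sb T1 T2 T3 rho t)) 0 Tf = endY y0 th0 s1 sa sb T1 T2 T3 Tf rho.
Proof.
  intros. rewrite RInt_sin_thb; try apply sq1; auto.
Qed.

Lemma build_le rho r x0 y0 th0 x y th tf s1 sa sb T1 T2 T3 Tf :
  optimal rho r x0 y0 th0 x y th tf ->
  0 < rho -> (s1 = 1 \/ s1 = -1) -> (sa = 1 \/ sa = -1) -> (sb = 1 \/ sb = -1) ->
  0 <= T1 -> T1 <= T2 -> T2 <= T3 -> T3 <= Tf -> 0 < Tf ->
  (endX x0 th0 s1 sa sb T1 T2 T3 Tf rho) ^ 2 + (endY y0 th0 s1 sa sb T1 T2 T3 Tf rho) ^ 2 = r ^ 2 ->
  endX x0 th0 s1 sa sb T1 T2 T3 Tf rho * cos (thff th0 s1 sa sb T1 T2 T3 Tf rho) +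
  endY y0 th0 s1 sa sb T1 T2 T3 Tf rho * sin (thff th0 s1 sa sb T1 T2 T3 Tf rho) = 0 ->
  tf <= Tf.
Proof.
  intros [_ Hopt] Hr H1 Ha Hb HT0 HT1 HT2 HT3 HTf HE1 HE2.
  set (thn := thb th0 s1 sa sb T1 T2 T3 rho).
  apply (Hopt (fun t => x0 + RInt (fun s => cos (thn s)) 0 t)
              (fun t => y0 + RInt (fun s => sin (thn s)) 0 t) thn Tf).
  assert (Hthf : thn Tf = thff th0 s1 sa sb T1 T2 T3 Tf rho).
  { unfold thn. rewrite thb_p4 by (try apply sq1; auto; lra). reflexivity. }
  unfold admissible. repeat split; cbv beta.
  all: try exact HTf.
  all: try (intros ? ?; split; reflexivity).
  all: try (rewrite RInt_point; unfold zero; simpl; ring).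
  all: try (intros t s _ _; apply thb_lip; auto).
  all: try (unfold thn; rewrite thb_p1 by (try apply sq1; auto; lra); field; lra).
  all: rewrite ?Hthf; unfold thn; rewrite RInt_cos_end, RInt_sin_end; auto.
Qed.

Lemma orig_end rho r x0 y0 th0 x y th tf t1 t2 s1 s3 :
  0 < rho -> admissible rho r x0 y0 th0 x y th tf -> is_CSC rho th0 th tf t1 t2 s1 s3 ->
  x tf = endX x0 th0 s1 s3 1 t1 t2 tf tf rho /\
  y tf = endY y0 th0 s1 s3 1 t1 t2 tf tf rho /\
  th tf = thff th0 s1 s3 1 t1 t2 tf tf rho.
Proof.
  intros Hr Had Hc.
  destruct Had as (Htf & Hx0 & Hy0 & Hth0 & Hlip & Hxy & HE1 & HE2).
  destruct Hc as (Ht1 & Ht12 & Ht2 & Hs1 & Hs3 & Hp1 & Hp2 & Hp3).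
  assert (Hb1 : (1:R) = 1 \/ (1:R) = -1) by (left; reflexivity).
  assert (Hth1 : th t1 = th0 + s1 * t1 / rho) by (apply Hp1; lra).
  assert (Hth2 : th t2 = th t1) by (apply Hp2; lra).
  assert (Heq : forall t, Rmin 0 tf < t < Rmax 0 tf ->
            th t = thb th0 s1 s3 1 t1 t2 tf rho t).
  { intros t Ht. rewrite Rmin_left in Ht by lra. rewrite Rmax_right in Ht by lra.
    destruct (Rle_dec t t1).
    - rewrite thb_p1 by (try apply sq1; auto; lra). rewrite Hp1 by lra. field. lra.
    - destruct (Rle_dec t t2).
      + rewrite thb_p2 by (try apply sq1; auto; lra). rewrite Hp2 by lra. rewrite Hth1. reflexivity.
      + rewrite thb_p3 by (try apply sq1; auto; lra). rewrite Hp3 by lra. rewrite Hth2, Hth1. reflexivity. }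
  destruct (Hxy tf) as [Hx Hy]; [lra|].
  split; [|split].
  - rewrite Hx. rewrite (RInt_ext (fun s => cos (th s)) (fun s => cos (thb th0 s1 s3 1 t1 t2 tf rho s))).
    + apply RInt_cos_end; auto; lra.
    + intros t Ht. rewrite Heq; auto.
  - rewrite Hy. rewrite (RInt_ext (fun s => sin (th s)) (fun s => sin (thb th0 s1 s3 1 t1 t2 tf rho s))).
    + apply RInt_sin_end; auto; lra.
    + intros t Ht. rewrite Heq; auto.
  - rewrite Hp3 by lra. rewrite Hth2, Hth1. unfold thff, th3f, th1f. field. lra.
Qed.

Definition kk (rho s1 s3 L ox oy : R) := (s3 - s1) * rho.
Definition exq (rho s1 s3 L ox oy : R) := L - ox.
Definition eyq (rho s1 s3 L ox oy : R) := s3 * rho - oy.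
Definition Wx (rho s1 s3 L ox oy p : R) := ox + cos p * exq rho s1 s3 L ox oy - sin p * eyq rho s1 s3 L ox oy.
Definition Wy (rho s1 s3 L ox oy p : R) := oy + sin p * exq rho s1 s3 L ox oy + cos p * eyq rho s1 s3 L ox oy - s1 * rho.
Definition Lp (rho s1 s3 L ox oy p : R) := sqrt (Wx rho s1 s3 L ox oy p ^ 2 + Wy rho s1 s3 L ox oy p ^ 2 - kk rho s1 s3 L ox oy ^ 2).
Definition Nn (rho s1 s3 L ox oy p : R) := Lp rho s1 s3 L ox oy p * Wy rho s1 s3 L ox oy p - kk rho s1 s3 L ox oy * Wx rho s1 s3 L ox oy p.
Definition Dn (rho s1 s3 L ox oy p : R) := Lp rho s1 s3 L ox oy p * Wx rho s1 s3 L ox oy p + kk rho s1 s3 L ox oy * Wy rho s1 s3 L ox oy p.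
Definition Dl (rho s1 s3 L ox oy p : R) := atan (Nn rho s1 s3 L ox oy p / Dn rho s1 s3 L ox oy p).
Definition Tfam (rho s1 s3 L ox oy p : R) := rho * s1 * Dl rho s1 s3 L ox oy p + rho * s3 * (p - Dl rho s1 s3 L ox oy p) + Lp rho s1 s3 L ox oy p - L.
Definition Qf (rho s1 s3 L ox oy p : R) := Wx rho s1 s3 L ox oy p ^ 2 + Wy rho s1 s3 L ox oy p ^ 2 - kk rho s1 s3 L ox oy ^ 2.

Section Fam.
Variables (rho s1 s3 L ox oy : R).
Local Notation nkk := (kk rho s1 s3 L ox oy).
Local Notation nex := (exq rho s1 s3 L ox oy).
Local Notation ney := (eyq rho s1 s3 L ox oy).
Local Notation nWx := (Wx rho s1 s3 L ox oy).
Local Notation nWy := (Wy rho s1 s3 L ox oy).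
Local Notation nLp := (Lp rho s1 s3 L ox oy).
Local Notation nNn := (Nn rho s1 s3 L ox oy).
Local Notation nDn := (Dn rho s1 s3 L ox oy).
Local Notation nDl := (Dl rho s1 s3 L ox oy).
Local Notation nTfam := (Tfam rho s1 s3 L ox oy).
Local Notation nQf := (Qf rho s1 s3 L ox oy).

Lemma Wx_d p : is_derive nWx p (- sin p * nex - cos p * ney).
Proof. unfold Wx. auto_derive; [exact I|]. ring. Qed.
Lemma Wy_d p : is_derive nWy p (cos p * nex - sin p * ney).
Proof. unfold Wy. auto_derive; [exact I|]. ring. Qed.

Lemma Wx0 : nWx 0 = L.
Proof. unfold Wx, exq. rewrite cos_0, sin_0. ring. Qed.
Lemma Wy0 : nWy 0 = nkk.
Proof. unfold Wy, eyq, kk. rewrite cos_0, sin_0. ring. Qed.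
Lemma dWx0 : Derive (fun x => nWx x) 0 = - ney.
Proof. apply is_derive_unique. replace (- ney) with (- sin 0 * nex - cos 0 * ney) by (rewrite cos_0, sin_0; ring). apply Wx_d. Qed.
Lemma dWy0 : Derive (fun x => nWy x) 0 = nex.
Proof. apply is_derive_unique. replace nex with (cos 0 * nex - sin 0 * ney) by (rewrite cos_0, sin_0; ring). apply Wy_d. Qed.

Lemma Tfam_d : 0 < rho -> 0 < L -> (s1 = 1 \/ s1 = -1) -> (s3 = 1 \/ s3 = -1) -> is_derive nTfam 0 oy.
Proof.
  intros Hr HL H1 H3.
  assert (HWx : forall p, ex_derive (fun x => nWx x) p) by (intros p; eexists; apply Wx_d).
  assert (HWy : forall p, ex_derive (fun x => nWy x) p) by (intros p; eexists; apply Wy_d).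
  assert (Hq : L * (L * 1) + nkk * (nkk * 1) + - (nkk * (nkk * 1)) = L ^ 2) by ring.
  assert (Hk2 : 0 <= nkk * nkk) by nra.
  unfold Tfam, Dl, Nn, Dn, Lp.
  auto_derive; rewrite ?Wx0, ?Wy0, ?dWx0, ?dWy0, ?Hq, ?sqrt_pow2 by lra.
  - repeat split; auto; try nra.
  - assert (HL2 : 0 < L * L) by nra. assert (Hr2 : 0 < rho * rho) by nra.
    assert (HA : 0 < L * L + 4 * (rho * rho)) by lra.
    assert (HA2 : 0 < (L * L + 4 * (rho * rho)) * (L * L + 4 * (rho * rho))) by (apply Rmult_lt_0_compat; lra).
    assert (HB2 : 0 < (L * L) * (L * L)) by (apply Rmult_lt_0_compat; lra).
    unfold exq, eyq, kk in *. destruct H1 as [-> | ->]; destruct H3 as [-> | ->]; field; repeat split; intro Hz; nra.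
Qed.

Lemma cont_eps (f : R -> R) x : ex_derive f x ->
  forall eps, 0 < eps -> exists d, 0 < d /\ forall y, Rabs (y - x) < d -> Rabs (f y - f x) < eps.
Proof.
  intros Hd eps He.
  assert (Hc : continuity_pt f x).
  { apply continuity_pt_filterlim. exact (ex_derive_continuous (K:=R_AbsRing) (V:=R_NormedModule) f x Hd). }
  destruct (Hc eps He) as [d [Hd0 Hd1]].
  exists d. split; auto. intros y Hy.
  destruct (Req_dec y x) as [->|Hne].
  - rewrite Rminus_diag, Rabs_R0. exact He.
  - apply (Hd1 y). split; [split; [exact I|intro Hxy; apply Hne; symmetry; exact Hxy]|exact Hy].
Qed.

Hypotheses (Hr : 0 < rho) (HL : 0 < L) (H1 : s1 = 1 \/ s1 = -1) (H3 : s3 = 1 \/ s3 = -1).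

Lemma Q0 : nQf 0 = L ^ 2.
Proof. unfold Qf. rewrite Wx0, Wy0. ring. Qed.
Lemma Lp0 : nLp 0 = L.
Proof. unfold Lp. fold (nQf 0). rewrite Q0. apply sqrt_pow2. lra. Qed.
Lemma Dn0 : nDn 0 = L ^ 2 + nkk ^ 2.
Proof. unfold Dn. rewrite Lp0, Wx0, Wy0. ring. Qed.
Lemma Dl0 : nDl 0 = 0.
Proof. unfold Dl, Nn. rewrite Lp0, Wx0, Wy0, Dn0. replace (L * nkk - nkk * L) with 0 by ring.
  unfold Rdiv. rewrite Rmult_0_l. apply atan_0. Qed.
Lemma Tfam0 : nTfam 0 = 0.
Proof. unfold Tfam. rewrite Dl0, Lp0. ring. Qed.

Lemma exWx p : ex_derive (fun x => nWx x) p.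
Proof. eexists; apply Wx_d. Qed.
Lemma exWy p : ex_derive (fun x => nWy x) p.
Proof. eexists; apply Wy_d. Qed.

Lemma exQ : ex_derive nQf 0.
Proof. unfold Qf. auto_derive. repeat split; apply exWx || apply exWy. Qed.
Lemma exLp : ex_derive (nLp) 0.
Proof. unfold Lp. auto_derive. rewrite Wx0, Wy0.
  repeat split; try apply exWx; try apply exWy. nra. Qed.
Lemma exDn : ex_derive (nDn) 0.
Proof. unfold Dn, Lp. auto_derive. rewrite Wx0, Wy0.
  repeat split; try apply exWx; try apply exWy; nra. Qed.
Lemma exDl : ex_derive (nDl) 0.
Proof. unfold Dl, Nn, Dn, Lp. auto_derive. rewrite Wx0, Wy0.
  replace (L * (L * 1) + nkk * (nkk * 1) + - (nkk * (nkk * 1))) with (L ^ 2) by ring.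
  rewrite sqrt_pow2 by lra.
  repeat split; try apply exWx; try apply exWy; try nra. Qed.

Lemma fam_exists : oy <> 0 -> forall eps, 0 < eps -> exists p,
  nTfam p < 0 /\ 0 < nDn p /\ 0 < nQf p /\
  Rabs (nDl p) < eps /\ Rabs (nLp p - L) < eps /\ Rabs p < eps.
Proof.
  intros Hoy eps He.
  assert (Hk2 : 0 <= nkk ^ 2) by nra.
  destruct (cont_eps _ _ exQ (L ^ 2) ltac:(nra)) as [d1 [Hd1 HQ]].
  destruct (cont_eps _ _ exDn (L ^ 2) ltac:(nra)) as [d2 [Hd2 HD]].
  destruct (cont_eps _ _ exDl eps He) as [d3 [Hd3 HDl]].
  destruct (cont_eps _ _ exLp eps He) as [d4 [Hd4 HLp]].
  pose proof (Tfam_d Hr HL H1 H3) as HT.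
  apply is_derive_Reals in HT.
  destruct (HT (Rabs oy / 2)) as [d5 Hd5]; [apply Rabs_pos_lt in Hoy; lra|].
  set (d := Rmin (Rmin (Rmin d1 d2) (Rmin d3 d4)) (Rmin d5 eps)).
  assert (Hd : 0 < d) by (unfold d; repeat apply Rmin_pos; auto; apply cond_pos).
  assert (Hdle : d <= d1 /\ d <= d2 /\ d <= d3 /\ d <= d4 /\ d <= d5 /\ d <= eps).
  { unfold d. repeat split; unfold Rmin; repeat destruct Rle_dec; lra. }
  set (p := if Rlt_dec 0 oy then - (d / 2) else d / 2).
  assert (Hp : Rabs p = d / 2 /\ p <> 0).
  { unfold p. destruct Rlt_dec; split; try (unfold Rabs; destruct Rcase_abs); lra. }
  assert (Hpd : Rabs (p - 0) < d) by (rewrite Rminus_0_r; lra).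
  exists p. repeat split.
  - specialize (Hd5 p (proj2 Hp) ltac:(lra)). rewrite Rplus_0_l, Tfam0 in Hd5.
    rewrite Rminus_0_r in Hd5.
    unfold p in *. destruct Rlt_dec.
    + rewrite (Rabs_right oy) in Hd5 by lra. apply Rabs_def2 in Hd5. destruct Hd5 as [Ha Hb].
      assert (Hq : 0 < nTfam (- (d / 2)) / (- (d / 2))) by lra.
      unfold Rdiv in Hq. rewrite <- Ropp_inv_permute in Hq by lra.
      assert (0 < / (d / 2)) by (apply Rinv_0_lt_compat; lra). nra.
    + assert (oy < 0) by lra. rewrite (Rabs_left oy) in Hd5 by lra. apply Rabs_def2 in Hd5. destruct Hd5 as [Ha Hb].
      assert (Hq : nTfam (d / 2) / (d / 2) < 0) by lra.
      unfold Rdiv in Hq.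
      assert (0 < / (d / 2)) by (apply Rinv_0_lt_compat; lra). nra.
  - specialize (HD p ltac:(lra)). rewrite Dn0 in HD. apply Rabs_def2 in HD. lra.
  - specialize (HQ p ltac:(lra)). rewrite Q0 in HQ. apply Rabs_def2 in HQ. lra.
  - specialize (HDl p ltac:(lra)). rewrite Dl0, Rminus_0_r in HDl. exact HDl.
  - specialize (HLp p ltac:(lra)). rewrite Lp0 in HLp. exact HLp.
  - lra.
Qed.
End Fam.

Lemma atan_cs (N D W2 : R) : 0 < D -> 0 < W2 -> D ^ 2 + N ^ 2 = W2 ^ 2 ->
  cos (atan (N / D)) = D / W2 /\ sin (atan (N / D)) = N / W2.
Proof.
  intros HD HW HE.
  assert (Hs : sqrt (1 + (N / D)²) = W2 / D).
  { replace (1 + (N / D)²) with ((W2 / D) ^ 2).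
    - apply sqrt_pow2. apply Rlt_le, Rdiv_lt_0_compat; lra.
    - replace ((W2 / D) ^ 2) with (W2 ^ 2 / D ^ 2) by (field; lra). rewrite <- HE. unfold Rsqr. field. lra. }
  rewrite cos_atan, sin_atan, Hs. split; field; lra.
Qed.

Section G.
Variables (rho s1 s3 x0 y0 th0 t1 t2 tf p : R).
Hypotheses (Hr : 0 < rho) (H1 : s1 = 1 \/ s1 = -1) (H3 : s3 = 1 \/ s3 = -1).

Let thA := th1f th0 s1 t1 rho.
Let c := cos thA.
Let s := sin thA.
Let Ax := x0 + rho * s1 * (sin thA - sin th0).
Let Ay := y0 - rho * s1 * (cos thA - cos th0).
Let ox := - (c * Ax + s * Ay).
Let oy := s * Ax - c * Ay.
Let L := t2 - t1.
Let Dlp := Dl rho s1 s3 L ox oy p.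
Let Lpp := Lp rho s1 s3 L ox oy p.
Let T1' := t1 + rho * s1 * Dlp.
Let T2' := T1' + Lpp.
Let T3' := T2' + (tf - t2) + rho * s3 * (p - Dlp).

Hypotheses (HDn : 0 < Dn rho s1 s3 L ox oy p) (HQ : 0 < Qf rho s1 s3 L ox oy p).

Lemma fam_end :
  endX x0 th0 s1 s3 1 T1' T2' T3' T3' rho =
    cos p * endX x0 th0 s1 s3 1 t1 t2 tf tf rho - sin p * endY y0 th0 s1 s3 1 t1 t2 tf tf rho /\
  endY y0 th0 s1 s3 1 T1' T2' T3' T3' rho =
    sin p * endX x0 th0 s1 s3 1 t1 t2 tf tf rho + cos p * endY y0 th0 s1 s3 1 t1 t2 tf tf rho /\
  thff th0 s1 s3 1 T1' T2' T3' T3' rho = thff th0 s1 s3 1 t1 t2 tf tf rho + p.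
Proof.
  assert (Hs1 : s1 * s1 = 1) by (apply sq1; auto).
  assert (Hs3 : s3 * s3 = 1) by (apply sq1; auto).
  assert (Hcs : c ^ 2 + s ^ 2 = 1) by (unfold c, s; pose proof (sin2_cos2 thA) as Hh; unfold Rsqr in Hh; nra).
  set (thf := thA + s3 * (tf - t2) / rho).
  assert (EA : th1f th0 s1 T1' rho = thA + Dlp).
  { unfold thA, th1f, T1'.
    replace (th0 + s1 * (t1 + rho * s1 * Dlp) / rho) with (th0 + s1 * t1 / rho + (s1 * s1) * Dlp) by (field; lra).
    rewrite Hs1. ring. }
  assert (E3 : th3f th0 s1 s3 T1' T2' T3' rho = thf + p).
  { unfold th3f. rewrite EA. unfold T3', T2', thf.
    replace (s3 * (T1' + Lpp + (tf - t2) + rho * s3 * (p - Dlp) - (T1' + Lpp)) / rho)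
      with (s3 * (tf - t2) / rho + (s3 * s3) * (p - Dlp)) by (field; lra).
    rewrite Hs3. ring. }
  assert (E3o : th3f th0 s1 s3 t1 t2 tf rho = thf) by (unfold th3f, thf, thA; reflexivity).
  assert (Eff : thff th0 s1 s3 1 T1' T2' T3' T3' rho = thf + p).
  { unfold thff. rewrite E3. field. lra. }
  assert (Effo : thff th0 s1 s3 1 t1 t2 tf tf rho = thf).
  { unfold thff. rewrite E3o. field. lra. }
  set (wx := Wx rho s1 s3 L ox oy p). set (wy := Wy rho s1 s3 L ox oy p).
  set (k := kk rho s1 s3 L ox oy).
  assert (HL2 : Lpp ^ 2 = wx ^ 2 + wy ^ 2 - k ^ 2).
  { unfold Lpp, Lp. fold wx wy k. rewrite pow2_sqrt; [reflexivity|]. unfold Qf in HQ. fold wx wy k in HQ. lra. }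
  assert (HW : 0 < wx ^ 2 + wy ^ 2) by (unfold Qf in HQ; fold wx wy k in HQ; nra).
  destruct (atan_cs (Nn rho s1 s3 L ox oy p) (Dn rho s1 s3 L ox oy p) (wx ^ 2 + wy ^ 2) HDn HW) as [Ec Es].
  { unfold Nn, Dn. fold wx wy k Lpp. rewrite <- (Rmult_1_r (Lpp * wy)) at 1.
    replace ((Lpp * wx + k * wy) ^ 2 + (Lpp * wy * 1 - k * wx) ^ 2) with ((Lpp ^ 2 + k ^ 2) * (wx ^ 2 + wy ^ 2)) by ring.
    rewrite HL2. ring. }
  fold Dlp in Ec, Es. unfold Dl in Dlp. fold Dlp in Ec, Es.
  unfold Nn, Dn in Ec, Es. fold wx wy k Lpp in Ec, Es.
  assert (Rx : Lpp * cos Dlp - k * sin Dlp = wx).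
  { rewrite Ec, Es. field_simplify; [|lra]. rewrite HL2. field. lra. }
  assert (Ry : Lpp * sin Dlp + k * cos Dlp = wy).
  { rewrite Ec, Es. field_simplify; [|lra]. rewrite HL2. field. lra. }
  assert (HAx : Ax = - (ox * c - oy * s)).
  { unfold ox, oy. replace (- (- (c * Ax + s * Ay) * c - (s * Ax - c * Ay) * s)) with ((c^2 + s^2) * Ax) by ring.
    rewrite Hcs. ring. }
  assert (HAy : Ay = - (ox * s + oy * c)).
  { unfold ox, oy. replace (- (- (c * Ax + s * Ay) * s + (s * Ax - c * Ay) * c)) with ((c^2 + s^2) * Ay) by ring.
    rewrite Hcs. ring. }
  unfold wx, wy, Wx, Wy, exq, eyq, k, kk in Rx, Ry.
  unfold endX, endY. rewrite Eff, Effo, EA, E3, E3o.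
  fold thA. fold c s L.
  rewrite !sin_plus, !cos_plus. fold c s.
  replace (T2' - T1') with Lpp by (unfold T2'; ring).
  replace (T3' - T3') with 0 by ring.
  replace (tf - tf) with 0 by ring.
  fold L.
  assert (EAx : x0 = Ax - rho * s1 * (s - sin th0)) by (unfold Ax; fold s; ring).
  assert (EAy : y0 = Ay + rho * s1 * (c - cos th0)) by (unfold Ay; fold c; ring).
  rewrite EAx, EAy, HAx, HAy.
  split; [|split]; [| |ring].
  - pose proof (f_equal (fun z => c * z) Rx) as Rx'. pose proof (f_equal (fun z => s * z) Ry) as Ry'.
    simpl in Rx', Ry'. lra.
  - pose proof (f_equal (fun z => s * z) Rx) as Rx'. pose proof (f_equal (fun z => c * z) Ry) as Ry'.
    simpl in Rx', Ry'. lra.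
Qed.
End G.

Section H.
Variables (rho s1 s3 x0 y0 th0 t1 L b n : R).
Hypotheses (Hr : 0 < rho) (H3 : s3 = 1 \/ s3 = -1) (Hb : cos b = cos n ^ 2).
Let thA := th1f th0 s1 t1 rho.
Let c := cos thA.
Let s := sin thA.
Hypotheses (HPx : x0 + rho * s1 * (sin thA - sin th0) + L * c = 0)
           (HPy : y0 - rho * s1 * (cos thA - cos th0) + L * s = 0).
Let ell := rho * (2 * sin b - sin (2 * n)).
Let T2 := t1 + L - ell.
Let T3 := T2 + rho * b.
Let Tf := T3 + rho * (PI + b - 2 * n).

Lemma bnd_end :
  let X := endX x0 th0 s1 (- s3) s3 t1 T2 T3 Tf rho in
  let Y := endY y0 th0 s1 (- s3) s3 t1 T2 T3 Tf rho in
  let th := thff th0 s1 (- s3) s3 t1 T2 T3 Tf rho in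
  X ^ 2 + Y ^ 2 = (2 * rho) ^ 2 /\ X * cos th + Y * sin th = 0.
Proof.
  intros X Y th.
  assert (E3 : th3f th0 s1 (- s3) t1 T2 T3 rho = thA - s3 * b).
  { unfold th3f, T3. fold thA. field. lra. }
  assert (Ef : th = thA - s3 * b + s3 * (PI + b - 2 * n)).
  { unfold th, thff. rewrite E3. unfold Tf. field. lra. }
  assert (Hcs : c ^ 2 + s ^ 2 = 1) by (unfold c, s; pose proof (sin2_cos2 thA) as Hh; unfold Rsqr in Hh; nra).
  assert (Hn : sin n ^ 2 + cos n ^ 2 = 1) by (pose proof (sin2_cos2 n) as Hh; unfold Rsqr in Hh; nra).
  assert (Hc2 : cos (2 * n) = 2 * cos b - 1) by (rewrite cos_2a_cos, Hb; ring).
  assert (Hs2 : sin (2 * n) = 2 * sin n * cos n) by (apply sin_2a).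
  assert (HPx' : x0 + rho * s1 * (s - sin th0) + L * c = 0) by exact HPx.
  assert (HPy' : y0 - rho * s1 * (c - cos th0) + L * s = 0) by exact HPy.
  assert (S1 : sin (thA - s3 * b) = s * cos b - s3 * c * sin b).
  { destruct H3 as [-> | ->]; [replace (thA - 1 * b) with (thA - b) by ring; rewrite sin_minus
     | replace (thA - -1 * b) with (thA + b) by ring; rewrite sin_plus]; fold c s; ring. }
  assert (C1 : cos (thA - s3 * b) = c * cos b + s3 * s * sin b).
  { destruct H3 as [-> | ->]; [replace (thA - 1 * b) with (thA - b) by ring; rewrite cos_minus
     | replace (thA - -1 * b) with (thA + b) by ring; rewrite cos_plus]; fold c s; ring. }
  assert (Sf : sin th = - (s * cos (2 * n) - s3 * c * sin (2 * n))).
  { rewrite Ef. destruct H3 as [-> | ->].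
    - replace (thA - 1 * b + 1 * (PI + b - 2 * n)) with ((thA - 2 * n) + PI) by ring.
      rewrite sin_plus, sin_PI, cos_PI, sin_minus. fold c s. ring.
    - replace (thA - -1 * b + -1 * (PI + b - 2 * n)) with ((thA + 2 * n) - PI) by ring.
      rewrite sin_minus, sin_PI, cos_PI, sin_plus. fold c s. ring. }
  assert (Cf : cos th = - (c * cos (2 * n) + s3 * s * sin (2 * n))).
  { rewrite Ef. destruct H3 as [-> | ->].
    - replace (thA - 1 * b + 1 * (PI + b - 2 * n)) with ((thA - 2 * n) + PI) by ring.
      rewrite cos_plus, sin_PI, cos_PI, cos_minus. fold c s. ring.
    - replace (thA - -1 * b + -1 * (PI + b - 2 * n)) with ((thA + 2 * n) - PI) by ring.
      rewrite cos_minus, sin_PI, cos_PI, cos_plus. fold c s. ring. }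
  assert (Sf' : sin (thff th0 s1 (- s3) s3 t1 T2 T3 Tf rho) = - (s * cos (2 * n) - s3 * c * sin (2 * n))) by exact Sf.
  assert (Cf' : cos (thff th0 s1 (- s3) s3 t1 T2 T3 Tf rho) = - (c * cos (2 * n) + s3 * s * sin (2 * n))) by exact Cf.
  assert (EX : X = 2 * rho * c * sin (2 * n) + rho * s3 * s * (2 - 4 * cos b)).
  { unfold X, endX. rewrite E3. fold thA. fold c s. rewrite S1, Sf'.
    replace (T2 - t1) with (L - ell) by (unfold T2; ring).
    unfold ell. rewrite Hc2. destruct H3 as [-> | ->]; lra. }
  assert (EY : Y = 2 * rho * s * sin (2 * n) - rho * s3 * c * (2 - 4 * cos b)).
  { unfold Y, endY. rewrite E3. fold thA. fold c s. rewrite C1, Cf'.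
    replace (T2 - t1) with (L - ell) by (unfold T2; ring).
    unfold ell. rewrite Hc2. destruct H3 as [-> | ->]; lra. }
  rewrite EX, EY, Sf, Cf, Hc2, Hs2, Hb.
  assert (Hs3 : s3 * s3 = 1) by (destruct H3 as [-> | ->]; ring).
  split.
  - replace ((2 * rho * c * (2 * sin n * cos n) + rho * s3 * s * (2 - 4 * cos n ^ 2)) ^ 2 +
      (2 * rho * s * (2 * sin n * cos n) - rho * s3 * c * (2 - 4 * cos n ^ 2)) ^ 2)
      with (4 * rho ^ 2 * (c ^ 2 + s ^ 2) * (4 * sin n ^ 2 * cos n ^ 2 + (s3 * s3) * (1 - 2 * cos n ^ 2) ^ 2)) by ring.
    rewrite Hcs, Hs3. replace (sin n ^ 2) with (1 - cos n ^ 2) by lra. ring.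
  - replace ((2 * rho * c * (2 * sin n * cos n) + rho * s3 * s * (2 - 4 * cos n ^ 2)) *
      - (c * (2 * cos n ^ 2 - 1) + s3 * s * (2 * sin n * cos n)) +
      (2 * rho * s * (2 * sin n * cos n) - rho * s3 * c * (2 - 4 * cos n ^ 2)) *
      - (s * (2 * cos n ^ 2 - 1) - s3 * c * (2 * sin n * cos n)))
      with (- (c ^ 2 + s ^ 2) * rho * (2 * sin n * cos n) * ((2 * (2 * cos n ^ 2 - 1)) + (s3 * s3) * (2 - 4 * cos n ^ 2))) by ring.
    rewrite Hs3. ring.
Qed.

End H.

Lemma sin_ap1 a : sin_approx a 1 = a - a ^ 3 / 6.
Proof. unfold sin_approx, sin_term. simpl. field. Qed.
Lemma sin_ap2 a : sin_approx a 2 = a - a ^ 3 / 6 + a ^ 5 / 120.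
Proof. unfold sin_approx, sin_term. simpl. field. Qed.
Lemma cos_ap1 a : cos_approx a 1 = 1 - a ^ 2 / 2.
Proof. unfold cos_approx, cos_term. simpl. field. Qed.
Lemma cos_ap2 a : cos_approx a 2 = 1 - a ^ 2 / 2 + a ^ 4 / 24.
Proof. unfold cos_approx, cos_term. simpl. field. Qed.

Lemma sin_lo a : 0 <= a -> a <= PI -> a - a ^ 3 / 6 <= sin a.
Proof. intros. rewrite <- sin_ap1. apply (sin_bound a 0); auto. Qed.
Lemma sin_hi a : 0 <= a -> a <= PI -> sin a <= a - a ^ 3 / 6 + a ^ 5 / 120.
Proof. intros. rewrite <- sin_ap2. apply (sin_bound a 0); auto. Qed.
Lemma cos_lo a : - PI / 2 <= a -> a <= PI / 2 -> 1 - a ^ 2 / 2 <= cos a.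
Proof. intros. rewrite <- cos_ap1. apply (cos_bound a 0); auto. Qed.
Lemma cos_hi a : - PI / 2 <= a -> a <= PI / 2 -> cos a <= 1 - a ^ 2 / 2 + a ^ 4 / 24.
Proof. intros. rewrite <- cos_ap2. apply (cos_bound a 0); auto. Qed.

Lemma bnd_ineq n : 0 < n -> n <= 1 / 2 ->
  let b := acos (cos n ^ 2) in
  cos b = cos n ^ 2 /\ 0 <= b /\ b <= 3 / 2 * n /\
  2 * b - 2 * n < 2 * sin b - sin (2 * n) /\ 2 * sin b - sin (2 * n) <= 3 * n.
Proof.
  intros Hn Hn2 b.
  pose proof PI2_1 as HPI.
  assert (Hc1 : 1 - n ^ 2 / 2 <= cos n) by (apply cos_lo; lra).
  assert (Hc2 : cos n <= 1 - n ^ 2 / 2 + n ^ 4 / 24) by (apply cos_hi; lra).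
  assert (Hcn : 0 <= cos n ^ 2 <= 1).
  { pose proof (COS_bound n). assert (0 <= cos n) by nra. split; [nra|]. nra. }
  assert (Hcb : cos b = cos n ^ 2) by (apply cos_acos; lra).
  destruct (acos_bound (cos n ^ 2)) as [Hb0 HbPI]. fold b in Hb0, HbPI.
  assert (Hb15 : b <= 3 / 2 * n).
  { destruct (Rle_dec b (3 / 2 * n)) as [|Hgt]; [auto|]. exfalso.
    assert (Hlt : cos b < cos (3 / 2 * n)) by (apply cos_decreasing_1; lra).
    assert (Hh : cos (3 / 2 * n) <= 1 - (3 / 2 * n) ^ 2 / 2 + (3 / 2 * n) ^ 4 / 24) by (apply cos_hi; lra).
    assert (Hsq : (1 - n ^ 2 / 2) ^ 2 <= cos n ^ 2).
    { assert (0 <= 1 - n ^ 2 / 2) by nra. apply pow_incr; lra. }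
    rewrite Hcb in Hlt. nra. }
  assert (Hsb : b - b ^ 3 / 6 <= sin b) by (apply sin_lo; lra).
  assert (Hsb2 : sin b <= b - b ^ 3 / 6 + b ^ 5 / 120) by (apply sin_hi; lra).
  assert (Hs2n : sin (2 * n) <= 2 * n - (2 * n) ^ 3 / 6 + (2 * n) ^ 5 / 120) by (apply sin_hi; lra).
  assert (Hs2n' : 0 <= sin (2 * n)) by (apply sin_ge_0; lra).
  assert (Hb3 : b ^ 3 <= (3 / 2 * n) ^ 3) by (apply pow_incr; lra).
  repeat split; try lra.
  - assert (Hn3 : 0 < n ^ 3) by (apply pow_lt; lra).
    assert (Hn5 : n ^ 5 <= n ^ 3 / 4).
    { replace (n ^ 5) with (n ^ 3 * n ^ 2) by ring. assert (n ^ 2 <= 1 / 4) by nra. nra. }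
    nra.
  - assert (Hb5 : b ^ 5 <= 20 * b ^ 3).
    { replace (b ^ 5) with (b ^ 3 * b ^ 2) by ring. assert (b ^ 2 <= 20) by nra.
      assert (0 <= b ^ 3) by (apply pow_le; lra). nra. }
    nra.
Qed.

Lemma sc1 (z : R) : sin z ^ 2 + cos z ^ 2 = 1.
Proof. pose proof (sin2_cos2 z) as Hh. unfold Rsqr in Hh. rewrite <- Hh. ring. Qed.

Theorem lemma4 (rho r x0 y0 th0 : R) (x y th : R -> R) (tf t1 t2 s1 s3 : R) :
  0 < rho -> 0 < r -> 0 <= th0 <= 2 * PI ->
  optimal rho r x0 y0 th0 x y th tf ->
  is_CSC rho th0 th tf t1 t2 s1 s3 ->
  (r / 2 <= rho ->
     sqrt ((turn_center_x rho s3 (x tf) (th tf)) ^ 2 +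
           (turn_center_y rho s3 (y tf) (th tf)) ^ 2) = r + rho) /\
  (rho < r / 2 ->
     rho <= sqrt ((turn_center_x rho s1 x0 th0) ^ 2 +
                  (turn_center_y rho s1 y0 th0) ^ 2)).
Proof.
  intros Hr Hrr _ Hopt Hcsc.
  pose proof Hopt as [Had _].
  destruct (orig_end rho r x0 y0 th0 x y th tf t1 t2 s1 s3 Hr Had Hcsc) as (Ex & Ey & Eth).
  pose proof Hcsc as (Ht1 & Ht12 & Ht2 & Hs1 & Hs3 & _).
  pose proof Had as (_ & _ & _ & _ & _ & _ & HF1 & HF2).
  rewrite Ex, Ey in HF1. rewrite Ex, Ey, Eth in HF2. rewrite Ex, Ey, Eth.
  set (X := endX x0 th0 s1 s3 1 t1 t2 tf tf rho) in *.
  set (Y := endY y0 th0 s1 s3 1 t1 t2 tf tf rho) in *.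
  set (thf := thff th0 s1 s3 1 t1 t2 tf tf rho) in *.
  set (thA := th1f th0 s1 t1 rho).
  set (c := cos thA). set (s := sin thA).
  set (Ax := x0 + rho * s1 * (sin thA - sin th0)).
  set (Ay := y0 - rho * s1 * (cos thA - cos th0)).
  set (ox := - (c * Ax + s * Ay)).
  set (oy := s * Ax - c * Ay).
  set (L := t2 - t1).
  assert (HL : 0 < L) by (unfold L; lra).
  assert (Hs1s : s1 * s1 = 1) by (apply sq1; auto).
  assert (Hs3s : s3 * s3 = 1) by (apply sq1; auto).
  assert (Hcs : c ^ 2 + s ^ 2 = 1) by (unfold c, s; pose proof (sin2_cos2 thA) as Hh; unfold Rsqr in Hh; nra).
  assert (Hcsf : cos thf ^ 2 + sin thf ^ 2 = 1) by (pose proof (sin2_cos2 thf) as Hh; unfold Rsqr in Hh; nra).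
  assert (Hoy : oy = 0).
  { destruct (Req_dec oy 0) as [|Hne]; [assumption|exfalso].
    set (eps := Rmin (t1 / rho) ((tf - t2) / (4 * rho))).
    assert (Heps : 0 < eps) by (unfold eps; apply Rmin_pos; apply Rdiv_lt_0_compat; lra).
    assert (He1 : eps <= t1 / rho) by (unfold eps; apply Rmin_l).
    assert (He2 : eps <= (tf - t2) / (4 * rho)) by (unfold eps; apply Rmin_r).
    destruct (fam_exists rho s1 s3 L ox oy Hr HL Hs1 Hs3 Hne eps Heps)
      as (p & HT & HDn & HQ & HDl & HLp & Hp).
    pose proof (fam_end rho s1 s3 x0 y0 th0 t1 t2 tf p Hr Hs1 Hs3 HDn HQ) as (EX' & EY' & Eth').
    set (Dlp := Dl rho s1 s3 L ox oy p) in *.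
    set (Lpp := Lp rho s1 s3 L ox oy p) in *.
    set (T1' := t1 + rho * s1 * Dlp). set (T2' := T1' + Lpp).
    set (T3' := T2' + (tf - t2) + rho * s3 * (p - Dlp)).
    assert (EX2 : endX x0 th0 s1 s3 1 T1' T2' T3' T3' rho = cos p * X - sin p * Y) by exact EX'.
    assert (EY2 : endY y0 th0 s1 s3 1 T1' T2' T3' T3' rho = sin p * X + cos p * Y) by exact EY'.
    assert (Eth2 : thff th0 s1 s3 1 T1' T2' T3' T3' rho = thf + p) by exact Eth'.
    assert (HLpp : 0 <= Lpp) by (unfold Lpp, Lp; apply sqrt_pos).
    assert (Hm1 : rho * Rabs Dlp < t1).
    { apply Rmult_lt_compat_l with (r := rho) in HDl; [|lra].
      assert (rho * eps <= t1) by (apply Rmult_le_compat_l with (r := rho) in He1; [|lra];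
        unfold Rdiv in He1; rewrite <- Rmult_assoc, (Rmult_comm rho t1), Rmult_assoc, Rinv_r in He1; lra).
      lra. }
    assert (Hm2 : rho * (Rabs p + Rabs Dlp) < (tf - t2) / 2).
    { assert (rho * eps <= (tf - t2) / 4).
      { apply Rmult_le_compat_l with (r := rho) in He2; [|lra].
        replace (rho * ((tf - t2) / (4 * rho))) with ((tf - t2) / 4) in He2 by (field; lra). lra. }
      nra. }
    assert (Ha1 : 0 <= t1 + rho * s1 * Dlp).
    { destruct Hs1 as [-> | ->]; unfold Rabs in Hm1; destruct Rcase_abs in Hm1; nra. }
    assert (Ha3 : 0 < (tf - t2) + rho * s3 * (p - Dlp)).
    { assert (Habs : Rabs (s3 * (p - Dlp)) <= Rabs p + Rabs Dlp).
      { destruct Hs3 as [-> | ->]; rewrite ?Rmult_1_l.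
        - unfold Rminus. eapply Rle_trans; [apply Rabs_triang|]. rewrite Rabs_Ropp. lra.
        - replace (-1 * (p - Dlp)) with (Dlp - p) by ring. unfold Rminus.
          eapply Rle_trans; [apply Rabs_triang|]. rewrite Rabs_Ropp. lra. }
      assert (Hb : - (rho * (Rabs p + Rabs Dlp)) <= rho * (s3 * (p - Dlp))).
      {
        apply Rle_trans with (- (rho * Rabs (s3 * (p - Dlp)))).
        - apply Ropp_le_contravar. apply Rmult_le_compat_l; lra.
        - assert (- Rabs (s3 * (p - Dlp)) <= s3 * (p - Dlp)) by (pose proof (Rle_abs (- (s3 * (p - Dlp)))); rewrite Rabs_Ropp in *; lra).
          nra. }
      lra. }
    assert (Hle : tf <= T3').
    { apply (build_le rho r x0 y0 th0 x y th tf s1 s3 1 T1' T2' T3' T3'); auto; unfold T3', T2', T1' in *; try lra.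
      - rewrite EX2, EY2.
        replace ((cos p * X - sin p * Y) ^ 2 + (sin p * X + cos p * Y) ^ 2)
          with ((sin p ^ 2 + cos p ^ 2) * (X ^ 2 + Y ^ 2)) by ring.
        rewrite HF1, sc1. ring.
      - rewrite EX2, EY2, Eth2. rewrite cos_plus, sin_plus.
        replace ((cos p * X - sin p * Y) * (cos thf * cos p - sin thf * sin p) +
                 (sin p * X + cos p * Y) * (sin thf * cos p + cos thf * sin p))
          with ((sin p ^ 2 + cos p ^ 2) * (X * cos thf + Y * sin thf)) by ring.
        rewrite HF2. ring. }
    unfold Tfam in HT. fold Dlp Lpp in HT. unfold T3', T2', T1' in Hle. unfold L in HT. lra. }
  assert (Ht3 : th3f th0 s1 s3 t1 t2 tf rho = thf) by (unfold thf, thff; field; lra).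
  assert (HX : X = Ax + L * c + rho * s3 * (sin thf - s)).
  { unfold X, endX. fold thA. rewrite Ht3. fold thf. unfold Ax, L, c, s. ring. }
  assert (HY : Y = Ay + L * s - rho * s3 * (cos thf - c)).
  { unfold Y, endY. fold thA. rewrite Ht3. fold thf. unfold Ay, L, c, s. ring. }
  split.
  -
    intros Hrho.
    unfold turn_center_x, turn_center_y.
    set (mu := - X * sin thf + Y * cos thf).
    assert (Hmu2 : mu ^ 2 = r ^ 2).
    { rewrite <- HF1. unfold mu.
      replace (X ^ 2 + Y ^ 2) with ((X * cos thf + Y * sin thf) ^ 2 + (- X * sin thf + Y * cos thf) ^ 2)
        by (replace (X ^ 2 + Y ^ 2) with ((cos thf ^ 2 + sin thf ^ 2) * (X ^ 2 + Y ^ 2)) by (rewrite Hcsf; ring); ring).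
      rewrite HF2. ring. }
    assert (Hc3 : (X - s3 * rho * sin thf) ^ 2 + (Y + s3 * rho * cos thf) ^ 2 = r ^ 2 + rho ^ 2 + 2 * rho * (s3 * mu)).
    { replace ((X - s3 * rho * sin thf) ^ 2 + (Y + s3 * rho * cos thf) ^ 2) with
        ((X ^ 2 + Y ^ 2) + (s3 * s3) * rho ^ 2 * (cos thf ^ 2 + sin thf ^ 2) + 2 * rho * (s3 * mu)) by (unfold mu; ring).
      rewrite HF1, Hs3s, Hcsf. ring. }
    assert (Hq : s3 * mu = r \/ s3 * mu = - r).
    { assert ((s3 * mu) ^ 2 = r ^ 2) by (replace ((s3 * mu) ^ 2) with ((s3 * s3) * mu ^ 2) by ring; rewrite Hs3s, Hmu2; ring).
      assert ((s3 * mu - r) * (s3 * mu + r) = 0) by nra.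
      apply Rmult_integral in H0. destruct H0; [left|right]; lra. }
    destruct Hq as [Hq | Hq].
    + rewrite Hc3, Hq. replace (r ^ 2 + rho ^ 2 + 2 * rho * r) with ((r + rho) ^ 2) by ring.
      apply sqrt_pow2. lra.
    + exfalso.
      set (Px := Ax + L * c). set (Py := Ay + L * s).
      assert (HAx : Ax = - (ox * c - oy * s)).
      { unfold ox, oy. replace (- (- (c * Ax + s * Ay) * c - (s * Ax - c * Ay) * s)) with ((c^2 + s^2) * Ax) by ring.
        rewrite Hcs. ring. }
      assert (HAy : Ay = - (ox * s + oy * c)).
      { unfold ox, oy. replace (- (- (c * Ax + s * Ay) * s + (s * Ax - c * Ay) * c)) with ((c^2 + s^2) * Ay) by ring.
        rewrite Hcs. ring. }
      assert (Hc3' : (X - s3 * rho * sin thf) ^ 2 + (Y + s3 * rho * cos thf) ^ 2 = Px ^ 2 + Py ^ 2 + rho ^ 2).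
      { rewrite HX, HY. unfold Px, Py. rewrite HAx, HAy, Hoy.
        replace ((- (ox * c - 0 * s) + L * c + rho * s3 * (sin thf - s) - s3 * rho * sin thf) ^ 2 +
                 (- (ox * s + 0 * c) + L * s - rho * s3 * (cos thf - c) + s3 * rho * cos thf) ^ 2)
          with ((L - ox) ^ 2 * (c ^ 2 + s ^ 2) + (s3 * s3) * rho ^ 2 * (c ^ 2 + s ^ 2)) by ring.
        replace ((- (ox * c - 0 * s) + L * c) ^ 2 + (- (ox * s + 0 * c) + L * s) ^ 2)
          with ((L - ox) ^ 2 * (c ^ 2 + s ^ 2)) by ring.
        rewrite Hcs, Hs3s. ring. }
      rewrite Hc3, Hq in Hc3'.
      assert (HP0 : Px ^ 2 + Py ^ 2 = 0) by nra.
      assert (Hr2 : r = 2 * rho) by nra.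
      assert (HPx : Px = 0) by nra. assert (HPy : Py = 0) by nra.
      (* the final arc is at least a half turn *)
      assert (Hcos : cos (s3 * (tf - t2) / rho) = -1).
      { assert (Hthf : thf = thA + s3 * (tf - t2) / rho).
        { unfold thf, thff, th3f. fold thA. field. lra. }
        assert (HXY : X ^ 2 + Y ^ 2 = rho ^ 2 * (2 - 2 * (cos thf * c + sin thf * s))).
        { rewrite HX, HY. fold Px Py. rewrite HPx, HPy.
          replace ((0 + rho * s3 * (sin thf - s)) ^ 2 + (0 - rho * s3 * (cos thf - c)) ^ 2)
            with (rho ^ 2 * (s3 * s3) * ((cos thf ^ 2 + sin thf ^ 2) + (c ^ 2 + s ^ 2) - 2 * (cos thf * c + sin thf * s))) by ring.
          rewrite Hs3s, Hcsf, Hcs. ring. }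
        rewrite HF1, Hr2 in HXY.
        assert (Hcc0 : rho ^ 2 * (cos thf * c + sin thf * s + 1) = 0) by lra.
        apply Rmult_integral in Hcc0. destruct Hcc0 as [Hcc0|Hcc0]; [nra|].
        assert (Hcc : cos thf * c + sin thf * s = -1) by lra.
        replace (s3 * (tf - t2) / rho) with (thf - thA) by (rewrite Hthf; ring).
        rewrite cos_minus. fold c s. lra. }
      assert (Hcos' : cos ((tf - t2) / rho) = -1).
      { destruct Hs3 as [-> | ->].
        - rewrite <- Hcos. f_equal. field. lra.
        - rewrite <- Hcos. replace (-1 * (tf - t2) / rho) with (- ((tf - t2) / rho)) by (field; lra).
          rewrite cos_neg. reflexivity. }
      assert (Hpi : PI <= (tf - t2) / rho).
      { destruct (Rle_dec PI ((tf - t2) / rho)) as [|Hlt]; [auto|exfalso].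
        assert (0 <= (tf - t2) / rho) by (apply Rlt_le, Rdiv_lt_0_compat; lra).
        assert (cos PI < cos ((tf - t2) / rho)) by (apply cos_decreasing_1; pose proof PI_RGT_0; lra).
        rewrite cos_PI in H0. lra. }
      assert (Htf : t1 + L + rho * PI <= tf).
      { apply Rmult_le_compat_l with (r := rho) in Hpi; [|lra].
        replace (rho * ((tf - t2) / rho)) with (tf - t2) in Hpi by (field; lra). unfold L. lra. }
      (* the shorter path *)
      set (n := Rmin (1 / 2) (L / (3 * rho))).
      assert (Hn0 : 0 < n) by (unfold n; apply Rmin_pos; [lra|apply Rdiv_lt_0_compat; lra]).
      assert (Hn1 : n <= 1 / 2) by (unfold n; apply Rmin_l).
      assert (Hn2 : n <= L / (3 * rho)) by (unfold n; apply Rmin_r).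
      destruct (bnd_ineq n Hn0 Hn1) as (Hcb & Hb0 & Hb15 & Hineq & Hell).
      set (b := acos (cos n ^ 2)) in *.
      assert (HPx' : x0 + rho * s1 * (sin thA - sin th0) + L * c = 0) by exact HPx.
      assert (HPy' : y0 - rho * s1 * (cos thA - cos th0) + L * s = 0) by exact HPy.
      assert (Hs3' : - s3 = 1 \/ - s3 = -1) by (destruct Hs3 as [-> | ->]; [right|left]; ring).
      pose proof (bnd_end rho s1 s3 x0 y0 th0 t1 L b n Hr Hs3 Hcb HPx' HPy') as (B1 & B2).
      set (ell := rho * (2 * sin b - sin (2 * n))) in *.
      assert (Hell' : ell <= L).
      { unfold ell. apply Rmult_le_compat_l with (r := rho) in Hell; [|lra].
        apply Rmult_le_compat_l with (r := 3 * rho) in Hn2; [|lra].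
        replace (3 * rho * (L / (3 * rho))) with L in Hn2 by (field; lra). lra. }
      assert (Hlt : rho * (2 * b - 2 * n) < ell) by (unfold ell; apply Rmult_lt_compat_l; lra).
      pose proof PI2_1 as HPI.
      assert (Hle : tf <= t1 + L - ell + rho * b + rho * (PI + b - 2 * n)).
      { assert (0 <= rho * b) by (apply Rmult_le_pos; lra).
        assert (0 <= rho * (PI + b - 2 * n)) by (apply Rmult_le_pos; lra).
        apply (build_le rho r x0 y0 th0 x y th tf s1 (- s3) s3 t1 (t1 + L - ell) (t1 + L - ell + rho * b)
                 (t1 + L - ell + rho * b + rho * (PI + b - 2 * n))); auto; try lra.
        all: try (rewrite Hr2; exact B1); try exact B2. }
      lra.
  -
    intros _.
    unfold turn_center_x, turn_center_y.
    assert (Hc1 : (x0 - s1 * rho * sin th0) ^ 2 + (y0 + s1 * rho * cos th0) ^ 2 = Ax ^ 2 + Ay ^ 2 + rho ^ 2).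
    { replace (x0 - s1 * rho * sin th0) with (Ax - s1 * rho * s) by (unfold Ax, s; ring).
      replace (y0 + s1 * rho * cos th0) with (Ay + s1 * rho * c) by (unfold Ay, c; ring).
      replace ((Ax - s1 * rho * s) ^ 2 + (Ay + s1 * rho * c) ^ 2) with
        (Ax ^ 2 + Ay ^ 2 + (s1 * s1) * rho ^ 2 * (c ^ 2 + s ^ 2) - 2 * s1 * rho * (s * Ax - c * Ay)) by ring.
      fold oy. rewrite Hoy, Hs1s, Hcs. ring. }
    rewrite Hc1. rewrite <- (sqrt_pow2 rho) at 1 by lra.
    apply sqrt_le_1_alt. nra.
Qed.
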